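(* In the setting of the context, let $\Lambda:B\to B'$ be a CPTP map, and for a Choi matrix $J$ (of a channel $\mathcal{E}:A'\to B$) let $J'=(\mathrm{id}_{A'}\otimes\Lambda)(J)$ be the Choi matrix of $\Lambda\circ\mathcal{E}$, and define $\sigma^{g}_{J'},\sigma^{t}_{J'}$ on $AB'$ by the same formulas as $\rho^g_J,\rho^t_J$ with $J'$ in place of $J$. Assume: (a) there is a POVM $\{P'_c\}_{c\in\mathcal{C}'}$ on $AB'$ with $\Phi'_c[\sigma]=\operatorname{Tr}(P'_c\sigma)$ such that $\Phi'_c[(\mathrm{id}_A\otimes\Lambda)(\rho)]=\Phi_c[\rho]$ for all $c$ and all states $\rho$ on $AB$; (b) there are constants $\theta_1,\theta_2$, a subset $\mathcal{F}\subseteq\mathcal{C}'$, a POVM element $M^A$ on $A$ and projectors $\Pi^B$ on $B$, $\Pi^{B'}$ on $B'$ with $\operatorname{Tr}[(M^A\otimes\Pi^{B'})(\mathrm{id}_A\otimes\Lambda)(\rho)]=\operatorname{Tr}[(M^A\otimes\Pi^{B})\rho]$ for all $\rho$, such that $\sum_{c\in\mathcal{F}}\Phi_c[\rho]\ge\theta_1\big(\theta_2-\operatorname{Tr}[(M^A\otimes\Pi^B)\rho]\big)$ for all states $\rho$ on $AB$; (c) $\hat W$ is a real function on states of $AB'$ with $\hat W(\sigma^g_{J'})\le W(\rho^g_J)$ for every Choi matrix $J$. Then for every $\mathbf{g}\in\mathbb{R}^{|\mathcal{C}'|}$, every probability distribution $\mathbf{q}^{\mathrm{hon}}$ on $\mathcal{C}'$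 and every $\alpha\in(1,3/2)$, $$\inf_{J}\Big(W(\rho^{g}_J)+\mathbf{g}\cdot(\mathbf{q}^{\mathrm{hon}}-\boldsymbol\Phi[\rho^t_J])-c_\alpha\widetilde V(\boldsymbol\Phi[\rho^t_J],\mathbf{g})\Big)\ \ge\ \inf_{J'\in\mathcal{D}'}\Big(\hat W(\sigma^{g}_{J'})+\mathbf{g}\cdot(\mathbf{q}^{\mathrm{hon}}-\boldsymbol\Phi'[\sigma^t_{J'}])-c_\alpha\widetilde V(\boldsymbol\Phi'[\sigma^t_{J'}],\mathbf{g})\Big),$$ where the left infimum is over all Choi matrices $J$ on $A'B$, $c_\alpha=\frac{\alpha-1}{2-\alpha}\frac{\ln 2}{2}$, and $$\mathcal{D}'=\Big\{J'\ge0 \text{ on } A'B' : \operatorname{Tr}_{B'}J'=\mathbb{1}_{A'},\ \sum_{c\in\mathcal{F}}\Phi'_c[\sigma^t_{J'}]\ge\theta_1\big(\theta_2-\operatorname{Tr}[(M^A\otimes\Pi^{B'})\sigma^t_{J'}]\big)\Big\}.$$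
   Context: $A,A',B,B'$ are finite-dimensional systems, $\ket{\xi^g},\ket{\xi^t}$ pure states on $AA'$. A Choi matrix is $J\ge0$ on $A'B$ with $\operatorname{Tr}_B J=\mathbb{1}_{A'}$, and $\rho^{g}_J=\operatorname{Tr}_{A'}[(\mathbb{1}_A\otimes J)(\ket{\xi^g}\!\bra{\xi^g}^{T_{A'}}\otimes\mathbb{1}_B)]$, $\rho^{t}_J$ likewise with $\xi^t$. $W$ is a real-valued function of states on $AB$; $\mathcal{C}'$ is a finite alphabet, $\Phi_c[\rho]=\operatorname{Tr}(P_c\rho)$ for a POVM $\{P_c\}_{c\in\mathcal{C}'}$ on $AB$, $\boldsymbol\Phi=(\Phi_c)_c$. Given $\gamma\in(0,1]$, an integer $d_A\ge1$ and $\kappa\in\{1,2\}$, for a distribution $\mathbf{q}$ on $\mathcal{C}'$ and $\mathbf{g}\in\mathbb{R}^{|\mathcal{C}'|}$, $$\widetilde V(\mathbf{q},\mathbf{g})=\Big(\log_2(1+2d_A^\kappa)+\sqrt{2+\sum_{c}\tfrac{q_c}{\gamma}(\max(\mathbf{g})-g_c)^2-(\max(\mathbf{g})-\mathbf{g}\cdot\mathbf{q})^2}\Big)^2.$$ *)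

(* Defs.v *)
From HB Require Import structures.
From mathcomp Require Import all_boot all_order all_algebra.
From mathcomp Require Import complex mxtens.
From mathcomp Require Import boolp classical_sets reals constructive_ereal ereal exp.

Set Implicit Arguments.
Unset Strict Implicit.
Unset Printing Implicit Defensive.

Import Order.TTheory GRing.Theory Num.Theory.
Local Open Scope ring_scope.

Section QDefs.
Variable R : realType.
Local Notation C := R[i].

Definition adjmx {m n} (A : 'M[C]_(m, n)) : 'M[C]_(n, m) :=
  (map_mx (fun x : C => x^*) A)^T.

(* positive semidefinite: <v, A v> >= 0 for all v (in a numClosedField,
   0 <= z means z is real and nonnegative) *)
Definition psd {n} (A : 'M[C]_n) : Prop :=
  forall v : 'cV[C]_n, 0 <= (adjmx v *m A *m v) 0 0.

Definition is_state {n} (rho : 'M[C]_n) : Prop := psd rho /\ \tr rho = 1.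

Definition unit_vec {n} (v : 'cV[C]_n) : Prop := (adjmx v *m v) 0 0 = 1.
Definition ketbra {n} (v : 'cV[C]_n) : 'M[C]_n := v *m adjmx v.

Definition povm {n} {I : finType} (P : I -> 'M[C]_n) : Prop :=
  (forall c, psd (P c)) /\ \sum_c P c = 1%:M.
Definition povm_elem {n} (M : 'M[C]_n) : Prop := psd M /\ psd (1%:M - M).
Definition projector {n} (P : 'M[C]_n) : Prop := P *m P = P /\ adjmx P = P.

(* Bipartite index conventions: index (i,j) of X (x) Y is mxtens_index (i,j),
   consistent with the Kronecker product  A *t B  of mxtens. *)
Local Notation idx i j := (mxtens_index (i, j)).
Local Notation un k := (mxtens_unindex k).

Definition ptr2 {m n} (M : 'M[C]_(m * n)) : 'M[C]_m :=
  \matrix_(i, i') \sum_(j < n) M (idx i j) (idx i' j).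

Definition ptransp2 {m n} (M : 'M[C]_(m * n)) : 'M[C]_(m * n) :=
  \matrix_(k, k') M (idx (un k).1 (un k').2) (idx (un k').1 (un k).2).

Definition ptr_mid {m n p} (M : 'M[C]_(m * (n * p))) : 'M[C]_(m * p) :=
  \matrix_(k, k') \sum_(j < n)
     M (idx (un k).1 (idx j (un k).2)) (idx (un k').1 (idx j (un k').2)).

Definition is_choi {a' b} (J : 'M[C]_(a' * b)) : Prop :=
  psd J /\ ptr2 J = 1%:M.

(* rho_J = Tr_{A'}[(1_A (x) J)(|xi><xi|^{T_{A'}} (x) 1_B)] on AB *)
Definition choi_state {a a' b} (xi : 'cV[C]_(a * a')) (J : 'M[C]_(a' * b))
  : 'M[C]_(a * b) :=
  ptr_mid ((1%:M : 'M[C]_a) *t J *m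
     castmx (esym (mulnA a a' b), esym (mulnA a a' b))
            (ptransp2 (ketbra xi) *t (1%:M : 'M[C]_b))).

(* (id_n (x) L)(M) for a map L : M_b -> M_b' (acting blockwise) *)
Definition idtens {n b b'} (L : 'M[C]_b -> 'M[C]_b') (M : 'M[C]_(n * b))
  : 'M[C]_(n * b') :=
  \matrix_(k, k') L (\matrix_(x, y) M (idx (un k).1 x) (idx (un k').1 y))
                    (un k).2 (un k').2.

Definition cptp {b b'} (L : 'M[C]_b -> 'M[C]_b') : Prop :=
  [/\ (forall (c : C) X Y, L (c *: X + Y) = c *: L X + L Y),
      (forall n (M : 'M[C]_(n * b)), psd M -> psd (idtens L M))
    & (forall X, \tr (L X) = \tr X)].

(* Phi_c[rho] = Tr(P_c rho) (real part; it is real on states) *)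
Definition Phi {n} {I : finType} (P : I -> 'M[C]_n) (rho : 'M[C]_n) (c : I)
  : R := complex.Re (\tr (P c *m rho)).

Definition prob_dist {I : finType} (q : I -> R) : Prop :=
  (forall c, 0 <= q c) /\ \sum_c q c = 1.

Definition log2 (x : R) : R := ln x / ln 2.

Definition maxv {I : finType} (g : I -> R) : R :=
  fine (\big[Order.max/-oo%E]_(c : I) ((g c)%:E)).

Definition dotv {I : finType} (g q : I -> R) : R := \sum_c g c * q c.

Definition Vtilde (gamma : R) (dA kappa : nat) {I : finType} (q g : I -> R)
  : R :=
  (log2 (1 + 2 * (dA%:R) ^+ kappa) +
   Num.sqrt (2 + \sum_c (q c / gamma) * (maxv g - g c) ^+ 2
               - (maxv g - dotv g q) ^+ 2)) ^+ 2.

Definition c_alpha (alpha : R) : R := (alpha - 1) / (2 - alpha) * (ln 2 / 2).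

End QDefs.

(* Main.v *)
Require Import Defs.
From HB Require Import structures.
From mathcomp Require Import all_boot all_order all_algebra.
From mathcomp Require Import complex mxtens ring.
From mathcomp Require Import boolp classical_sets reals constructive_ereal ereal exp.
Import Order.TTheory GRing.Theory Num.Theory.
Local Open Scope ring_scope.
Local Open Scope classical_set_scope.


Section H.
Context {R : realType}.
Local Notation C := R[i].
Local Notation idx i j := (mxtens_index (i, j)).

Lemma sum_idx m n (F : 'I_(m*n) -> C) :
  \sum_k F k = \sum_(i < m) \sum_(j < n) F (idx i j).
Proof.
rewrite pair_big /=; apply: reindex => /=.
by exists (@mxtens_unindex m n) => k _; rewrite (mxtens_indexK, mxtens_unindexK) //; case: k.
Qed.

Lemma sum_delta n (i : 'I_n) (f : 'I_n -> C) :
  \sum_k ((i == k)%:R * f k) = f i.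
Proof.
rewrite (bigD1 i) //= eqxx mul1r big1 ?addr0 // => k; rewrite eq_sym => /negbTE ->.
by rewrite mul0r.
Qed.

Lemma sum_delta' n (i : 'I_n) (f : 'I_n -> C) :
  \sum_k (f k * (k == i)%:R) = f i.
Proof.
rewrite (bigD1 i) //= eqxx mulr1 big1 ?addr0 // => k /negbTE ->.
by rewrite mulr0.
Qed.

Lemma cast_idx3 a a' b (e : (a * (a' * b) = a * a' * b)%N) i j k :
  cast_ord e (idx i (idx j k)) = idx (idx i j) k.
Proof. apply: val_inj => /=; rewrite mulnDl -mulnA addnA //. Qed.

Lemma id1E n (i j : 'I_n) : (1%:M : 'M[C]_n) i j = (i == j)%:R.
Proof. by rewrite mxE. Qed.

Lemma ketbraE n (v : 'cV[C]_n) k k' : ketbra v k k' = v k 0 * (v k' 0)^*.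
Proof. by rewrite /ketbra /adjmx mxE big_ord1 !mxE. Qed.

Lemma ptransp2E m n (M : 'M[C]_(m * n)) i j i' j' :
  ptransp2 M (idx i j) (idx i' j') = M (idx i j') (idx i' j).
Proof. by rewrite mxE !mxtens_indexK. Qed.

Lemma gen_delta a a' b (i : 'I_a) (y' : 'I_b) (A : 'I_a' -> 'I_b -> C)
   (B : 'I_a -> 'I_a' -> C) :
  \sum_(i2 < a) \sum_(i0 < a') \sum_(j0 < b)
     ((i == i2)%:R * A i0 j0) * (B i2 i0 * (j0 == y')%:R) =
  \sum_(i0 < a') A i0 y' * B i i0.
Proof.
rewrite exchange_big; apply: eq_bigr => i0 _.
rewrite exchange_big /=.
rewrite (eq_bigr (fun j0 => (\sum_(i2 < a) (i == i2)%:R * (A i0 j0 * B i2 i0)) * (j0 == y')%:R)); last first.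
  move=> j0 _; rewrite mulr_suml; apply: eq_bigr => i2 _; ring.
rewrite sum_delta'. rewrite sum_delta //.
Qed.

Lemma choi_stateE a a' b (xi : 'cV[C]_(a * a')) (J : 'M[C]_(a' * b)) i y i' y' :
  choi_state xi J (idx i y) (idx i' y') =
  \sum_(j < a') \sum_(j2 < a')
     (xi (idx i j) 0 * (xi (idx i' j2) 0)^*) * J (idx j y) (idx j2 y').
Proof.
rewrite /choi_state /ptr_mid mxE !mxtens_indexK.
apply: eq_bigr => j _.
rewrite mxE (@sum_idx a (a'*b)).
under eq_bigr => i2 _ do rewrite (@sum_idx a' b).
under eq_bigr => i2 _ do under eq_bigr => i0 _ do under eq_bigr => j0 _ do
  rewrite tensmxE castmxE !cast_idx3 tensmxE ptransp2E ketbraE !id1E.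
rewrite (@gen_delta _ _ _ i y' (fun i0 j0 => J (idx j y) (idx i0 j0))
   (fun i2 i0 => xi (idx i2 j) 0 * (xi (idx i' i0) 0)^*)).
apply: eq_bigr => j2 _; ring.
Qed.
Definition blk {m n} (M : 'M[C]_(m * n)) i i' : 'M[C]_n :=
  \matrix_(x, z) M (idx i x) (idx i' z).

Lemma idtensE n b b' (L : 'M[C]_b -> 'M[C]_b') (M : 'M[C]_(n * b)) i y i' y' :
  idtens L M (idx i y) (idx i' y') = L (blk M i i') y y'.
Proof. by rewrite mxE !mxtens_indexK. Qed.

Definition linL {b b'} (L : 'M[C]_b -> 'M[C]_b') :=
  forall (c : C) X Y, L (c *: X + Y) = c *: L X + L Y.

Lemma L0 {b b'} {L : 'M[C]_b -> 'M[C]_b'} : linL L -> L 0 = 0.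
Proof.
move=> H; have := H (-1) 0 0; rewrite scaler0 addr0 scaleN1r addNr //.
Qed.

Lemma LD {b b'} {L : 'M[C]_b -> 'M[C]_b'} : linL L -> forall X Y, L (X + Y) = L X + L Y.
Proof. by move=> H X Y; have := H 1 X Y; rewrite !scale1r. Qed.

Lemma LZ {b b'} {L : 'M[C]_b -> 'M[C]_b'} : linL L -> forall c X, L (c *: X) = c *: L X.
Proof. by move=> H c X; have := H c X 0; rewrite addr0 (L0 H) addr0. Qed.

Lemma Lsum {b b'} {L : 'M[C]_b -> 'M[C]_b'} {n} {F : 'I_n -> 'M[C]_b} : linL L ->
  L (\sum_(k < n) F k) = \sum_(k < n) L (F k).
Proof. by move=> H; apply: (big_morph L (LD H) (L0 H)). Qed.

Lemma choi_comm a a' b b' (L : 'M[C]_b -> 'M[C]_b') (xi : 'cV[C]_(a * a'))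
  (J : 'M[C]_(a' * b)) : linL L ->
  choi_state xi (idtens L J) = idtens L (choi_state xi J).
Proof.
move=> H; apply/matrixP => k k'.
case: (mxtens_indexP k) => i y; case: (mxtens_indexP k') => i' y'.
rewrite choi_stateE idtensE.
have -> : blk (choi_state xi J) i i' = \sum_(j < a') \sum_(j2 < a')
     (xi (idx i j) 0 * (xi (idx i' j2) 0)^*) *: blk J j j2.
  apply/matrixP=> x z; rewrite mxE choi_stateE summxE; apply: eq_bigr => j _.
  by rewrite summxE; apply: eq_bigr => j2 _; rewrite !mxE.
rewrite (Lsum H) summxE; apply: eq_bigr => j _.
rewrite (Lsum H) summxE; apply: eq_bigr => j2 _.
by rewrite (LZ H) mxE !mxtens_indexK mxE.
Qed.
Lemma adjmxM m n p (A : 'M[C]_(m,n)) (B : 'M[C]_(n,p)) :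
  adjmx (A *m B) = adjmx B *m adjmx A.
Proof. by rewrite /adjmx map_mxM trmx_mul. Qed.

Lemma adjmxE m n (A : 'M[C]_(m,n)) k l : adjmx A k l = (A l k)^*.
Proof. by rewrite !mxE. Qed.

Lemma sum_delta2 n (i : 'I_n) (f : 'I_n -> C) :
  \sum_k (f k * (i == k)%:R) = f i.
Proof.
rewrite (bigD1 i) //= eqxx mulr1 big1 ?addr0 // => k; rewrite eq_sym => /negbTE ->.
by rewrite mulr0.
Qed.

Lemma is_choi_idtens a' b b' (L : 'M[C]_b -> 'M[C]_b') (J : 'M[C]_(a' * b)) :
  cptp L -> is_choi J -> is_choi (idtens L J).
Proof.
case=> _ Hpsd Htr [HJ HJ1]; split; first exact: Hpsd.
apply/matrixP => i i'; rewrite -HJ1 !mxE.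
under eq_bigr => j _ do rewrite idtensE.
have := Htr (blk J i i'); rewrite /mxtrace => ->.
by apply: eq_bigr => j _; rewrite mxE.
Qed.

Lemma choi_trace a a' b (xi : 'cV[C]_(a * a')) (J : 'M[C]_(a' * b)) :
  unit_vec xi -> is_choi J -> \tr (choi_state xi J) = 1.
Proof.
move=> Hxi [_ HJ1].
rewrite /mxtrace (@sum_idx a b).
transitivity (\sum_(i < a) \sum_(j < a') \sum_(j2 < a')
   (xi (idx i j) 0 * (xi (idx i j2) 0)^*) * ptr2 J j j2).
  apply: eq_bigr => i _.
  under eq_bigr => y _ do rewrite choi_stateE.
  rewrite exchange_big; apply: eq_bigr => j _.
  rewrite exchange_big; apply: eq_bigr => j2 _.
  by rewrite mxE mulr_sumr.
rewrite HJ1.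
under eq_bigr => i _ do under eq_bigr => j _ do under eq_bigr => j2 _ do rewrite id1E.
under eq_bigr => i _ do under eq_bigr => j _ do rewrite sum_delta2.
rewrite -(@sum_idx a a' (fun k => xi k 0 * (xi k 0)^*)).
rewrite -Hxi mxE; apply: eq_bigr => k _; rewrite adjmxE mulrC. by [].
Qed.

Definition Kmx {a a'} b (xi : 'cV[C]_(a * a')) : 'M[C]_(a' * b, a * b) :=
  \matrix_(m, k) (((mxtens_unindex m).2 == (mxtens_unindex k).2)%:R *
       (xi (idx (mxtens_unindex k).1 (mxtens_unindex m).1) 0)^*).

Lemma KmxE {a a'} b (xi : 'cV[C]_(a * a')) j y2 i y :
  Kmx b xi (idx j y2) (idx i y) = (y2 == y)%:R * (xi (idx i j) 0)^*.
Proof. by rewrite mxE !mxtens_indexK. Qed.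

Lemma sum_delta3 n (i : 'I_n) (f : 'I_n -> C) :
  \sum_k ((k == i)%:R * f k) = f i.
Proof.
rewrite (bigD1 i) //= eqxx mul1r big1 ?addr0 // => k /negbTE ->.
by rewrite mul0r.
Qed.

Lemma cM (x y : C) : (x * y)^* = x^* * y^*.
Proof. exact: rmorphM. Qed.
Lemma cK (x : C) : x^*^* = x.
Proof. exact: conjCK. Qed.
Lemma cN n : (n%:R : C)^* = n%:R.
Proof. exact: rmorph_nat. Qed.

Lemma choi_K a a' b (xi : 'cV[C]_(a * a')) (J : 'M[C]_(a' * b)) :
  choi_state xi J = adjmx (Kmx b xi) *m J *m Kmx b xi.
Proof.
apply/matrixP => k k'.
case: (mxtens_indexP k) => i y; case: (mxtens_indexP k') => i' y'.
rewrite choi_stateE exchange_big mxE (@sum_idx a' b).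
apply: eq_bigr => j2 _ /=.
symmetry. under eq_bigr => y3 _ do rewrite KmxE mulrCA.
rewrite sum_delta3 mxE (@sum_idx a' b) mulr_suml.
apply: eq_bigr => j _.
under eq_bigr => y2 _ do rewrite adjmxE KmxE cM cK cN -!mulrA.
rewrite sum_delta3; ring.
Qed.

Lemma choi_psd a a' b (xi : 'cV[C]_(a * a')) (J : 'M[C]_(a' * b)) :
  is_choi J -> psd (choi_state xi J).
Proof.
move=> [HJ _] v; rewrite choi_K.
have -> : adjmx v *m (adjmx (Kmx b xi) *m J *m Kmx b xi) *m v =
   adjmx (Kmx b xi *m v) *m J *m (Kmx b xi *m v).
  by rewrite adjmxM !mulmxA.
exact: HJ.
Qed.
End H.

Theorem mainTheorem3
  (R : realType) (a a' b b' : nat) (C' : finType)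
  (xig xit : 'cV[R[i]]_(a * a'))
  (W : 'M[R[i]]_(a * b) -> R)
  (P : C' -> 'M[R[i]]_(a * b))
  (gamma : R) (dA kappa : nat)
  (L : 'M[R[i]]_b -> 'M[R[i]]_b')
  (P' : C' -> 'M[R[i]]_(a * b'))
  (theta1 theta2 : R) (F : {set C'})
  (MA : 'M[R[i]]_a) (PiB : 'M[R[i]]_b) (PiB' : 'M[R[i]]_b')
  (What : 'M[R[i]]_(a * b') -> R) :
  unit_vec xig -> unit_vec xit ->
  povm P ->
  0 < gamma <= 1 -> (1 <= dA)%N -> (kappa = 1 \/ kappa = 2)%N ->
  cptp L ->
  (* (a) *)
  povm P' ->
  (forall (rho : 'M[R[i]]_(a * b)), is_state rho ->
     forall c, Phi P' (idtens L rho) c = Phi P rho c) ->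
  (* (b) *)
  povm_elem MA -> projector PiB -> projector PiB' ->
  (forall (rho : 'M[R[i]]_(a * b)), is_state rho ->
     \tr ((MA *t PiB') *m idtens L rho) = \tr ((MA *t PiB) *m rho)) ->
  (forall (rho : 'M[R[i]]_(a * b)), is_state rho ->
     \sum_(c in F) Phi P rho c >=
       theta1 * (theta2 - complex.Re (\tr ((MA *t PiB) *m rho)))) ->
  (* (c) *)
  (forall J : 'M[R[i]]_(a' * b), is_choi J ->
     What (choi_state xig (idtens L J)) <= W (choi_state xig J)) ->
  forall (g q : C' -> R), prob_dist q ->
  forall alpha : R, 1 < alpha < 3 / 2 ->
  (ereal_inf
     [set ((What (choi_state xig J')
            + \sum_c g c * (q c - Phi P' (choi_state xit J') c)
            - c_alpha alpha
                * Vtilde gamma dA kappa (Phi P' (choi_state xit J')) g)%R%:E)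
     | J' in [set J' : 'M[R[i]]_(a' * b') |
               is_choi J' /\
               (\sum_(c in F) Phi P' (choi_state xit J') c >=
                 theta1 * (theta2 - complex.Re
                    (\tr ((MA *t PiB') *m choi_state xit J'))))%R]]
   <=
   ereal_inf
     [set ((W (choi_state xig J)
            + \sum_c g c * (q c - Phi P (choi_state xit J) c)
            - c_alpha alpha
                * Vtilde gamma dA kappa (Phi P (choi_state xit J)) g)%R%:E)
     | J in [set J : 'M[R[i]]_(a' * b) | is_choi J]])%E.

Proof.
move=> Hxg Hxt HP Hg HdA Hk HL HP' Ha HMA HPB HPB' Hb1 Hb2 Hc g q Hq alpha Halpha.
have Hlin : linL L by case: HL.
apply: le_ereal_inf_tmp => y [J HJ <-].
have HJ' : is_choi (idtens L J) := @is_choi_idtens _ _ _ _ _ _ HL HJ.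
have Hst : is_state (choi_state xit J) := conj (@choi_psd _ _ _ _ xit _ HJ) (@choi_trace _ _ _ _ _ _ Hxt HJ).
have HPhi : Phi P' (choi_state xit (idtens L J)) = Phi P (choi_state xit J).
  by apply: funext => c; rewrite choi_comm // Ha.
apply: ge_ereal_inf; eexists.
  exists (idtens L J); last reflexivity.
  split => //; rewrite HPhi choi_comm // Hb1 //; exact: Hb2.
rewrite HPhi lee_fin lerD2r lerD2r; exact: Hc.
Qed.
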